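(* Let two vehicles $i$ and $j$ move in the plane according to dynamics $(\dot{\boldsymbol\xi},\dot{\boldsymbol\zeta})^{\mathsf T}=F(t,\boldsymbol\xi,\boldsymbol\zeta)$ with bounded velocity and acceleration, as described in the context. Fix a time $t_\circ$ and assume that, for $t\ge t_\circ$, the trajectory $t\mapsto \mathbf p_k(t)$ of each vehicle $k\in\{i,j\}$ is given either by the straight-line model or by the circular model described in the context. Let $d_{ij}(t)=\|\mathbf p_i(t)-\mathbf p_j(t)\|_2$, let $\phi>0$, and let $$\mathcal T_S=\inf\{t\ge t_\circ:\ d_{ij}(t)-\phi\le 0\}.$$ If $\mathcal T_S<\infty$, then there exists $\check t$ with $t_\circ\le \check t<\mathcal T_S$ such that $t\mapsto d_{ij}(t)-\phi$ is strictly decreasing on $[\check t,\mathcal T_S)$.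
   Context: Each vehicle has position $\boldsymbol\xi(t)\in\mathbb R^2$ and velocity $\boldsymbol\zeta(t)\in\mathbb R^2$ obeying $(\dot{\boldsymbol\xi},\dot{\boldsymbol\zeta})^{\mathsf T}=F(t,\boldsymbol\xi,\boldsymbol\zeta)$ with $F:\mathbb R_+\times\mathbb R^2\times\mathbb R^2\to\mathbb R^4$ smooth enough that the solution exists uniquely up to the collision time $\mathcal T$, and with $\boldsymbol\zeta\in C^1([0,\mathcal T);B(0,v_{\max}))$, $\dot{\boldsymbol\zeta}\in C([0,\mathcal T);B(0,a_{\max}))$ (bounded velocity and acceleration; $B(x,r)$ is the open Euclidean ball). Vehicles are modeled as disks of common diameter $\phi$, so a collision means $d_{ij}\le\phi$. At time $t_\circ$ set $(\mathbf p_\circ,\mathbf v_\circ,\mathbf a_\circ)=(\boldsymbol\xi(t_\circ),\boldsymbol\zeta(t_\circ),\dot{\boldsymbol\zeta}(t_\circ))$ for each vehicle, $\mathbf v_*=\mathbf v_\circ/\|\mathbf v_\circ\|_2=(v_{*x},v_{*y})$, $\mathbf v_\perp=(-v_{*y},v_{*x})$, longitudinal acceleration $a_f=\mathbf a_\circ\cdot\mathbf v_*$ and lateral acceleration $a_s=\mathbf a_\circ\cdot\mathbf v_\perp$. Straight-line model (used when $a_s$ is zero or negligible): $\mathbf p(t)=\mathbf p_\circ+\mathbf v_\circ(t-t_\circ)+\tfrac12\mathbf a_\circ(t-t_\circ)^2$, $\mathbf v(t)=\mathbf v_\circ+\mathbf a_\circ(t-t_\circ)$, $\mathbf a(t)\equiv\mathbf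 a_\circ$. Circular model (used when $a_s\neq0$): $r=\|\mathbf v_\circ\|_2^2/|a_s|$, $\omega_0=a_s/\|\mathbf v_\circ\|_2$, center $\mathbf c=\mathbf p_\circ+r\,\mathrm{sgn}(a_s)\mathbf v_\perp$, initial phase $\alpha_0=\mathrm{sgn}(p_{\circ,y}-c_y)\arccos\big((p_{\circ,x}-c_x)/r\big)$, where $\mathrm{sgn}(z)=1$ if $z\ge0$ and $-1$ otherwise; $\omega(t)=\min\{0,\omega_0+\tfrac{a_f}{2r}(t-t_\circ)\}$ if $\omega_0<0$ and $\omega(t)=\max\{0,\omega_0+\tfrac{a_f}{2r}(t-t_\circ)\}$ if $\omega_0>0$; and $\mathbf p(t)=\mathbf c+r\big(\cos(\alpha_0+\omega(t)(t-t_\circ)),\ \sin(\alpha_0+\omega(t)(t-t_\circ))\big)$ for $t\ge t_\circ$. *)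

(* Defs.v *)
From Stdlib Require Import Reals Lra.
Open Scope R_scope.

Definition vec : Type := (R * R)%type.

Definition vadd (u w : vec) : vec := (fst u + fst w, snd u + snd w).
Definition vsub (u w : vec) : vec := (fst u - fst w, snd u - snd w).
Definition vscale (k : R) (u : vec) : vec := (k * fst u, k * snd u).
Definition vdot (u w : vec) : R := fst u * fst w + snd u * snd w.
Definition vnorm (u : vec) : R := sqrt (fst u ^ 2 + snd u ^ 2).

Definition sgn (z : R) : R := if Rle_dec 0 z then 1 else -1.

Definition vstar (v0 : vec) : vec := vscale (/ vnorm v0) v0.
Definition vperp (v0 : vec) : vec := (- snd (vstar v0), fst (vstar v0)).
Definition a_f (v0 a0 : vec) : R := vdot a0 (vstar v0).
Definition a_s (v0 a0 : vec) : R := vdot a0 (vperp v0).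

Definition straight_pos (t0 : R) (p0 v0 a0 : vec) (t : R) : vec :=
  vadd p0 (vadd (vscale (t - t0) v0) (vscale (/ 2 * (t - t0) ^ 2) a0)).

Definition circ_r (v0 a0 : vec) : R := vnorm v0 ^ 2 / Rabs (a_s v0 a0).
Definition circ_omega0 (v0 a0 : vec) : R := a_s v0 a0 / vnorm v0.
Definition circ_center (p0 v0 a0 : vec) : vec :=
  vadd p0 (vscale (circ_r v0 a0 * sgn (a_s v0 a0)) (vperp v0)).
Definition circ_alpha0 (p0 v0 a0 : vec) : R :=
  let c := circ_center p0 v0 a0 in
  sgn (snd p0 - snd c) * acos ((fst p0 - fst c) / circ_r v0 a0).
Definition circ_omega (t0 : R) (v0 a0 : vec) (t : R) : R :=
  let w := circ_omega0 v0 a0 + a_f v0 a0 / (2 * circ_r v0 a0) * (t - t0) in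
  if Rlt_dec (circ_omega0 v0 a0) 0 then Rmin 0 w else Rmax 0 w.
Definition circ_pos (t0 : R) (p0 v0 a0 : vec) (t : R) : vec :=
  let th := circ_alpha0 p0 v0 a0 + circ_omega t0 v0 a0 t * (t - t0) in
  vadd (circ_center p0 v0 a0) (vscale (circ_r v0 a0) (cos th, sin th)).

Inductive model : Type := Straight | Circular.

Definition model_ok (m : model) (v0 a0 : vec) : Prop :=
  match m with Straight => True | Circular => a_s v0 a0 <> 0 end.

Definition model_pos (m : model) (t0 : R) (p0 v0 a0 : vec) (t : R) : vec :=
  match m with
  | Straight => straight_pos t0 p0 v0 a0 t
  | Circular => circ_pos t0 p0 v0 a0 t
  end.

Definition is_glb (S : R -> Prop) (m : R) : Prop :=
  (forall x, S x -> m <= x) /\ (forall b, (forall x, S x -> b <= x) -> b <= m).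

(* Main.v *)
Require Import Defs.
From Stdlib Require Import Reals.
From Coquelicot Require Import Coquelicot.
From Stdlib Require Import Lra Lia Classical.
Open Scope R_scope.

Lemma bounded_of_lim (u : nat -> R) : is_lim_seq u 0 -> exists M, forall n, Rabs (u n) <= M.
Proof.
  intros H.
  apply is_lim_seq_spec in H.
  destruct (H (mkposreal 1 Rlt_0_1)) as [N HN]. simpl in HN.
  assert (Hf : forall K, exists M, forall n, (n < K)%nat -> Rabs (u n) <= M).
  { induction K as [|K [M HM]].
    - exists 0. intros n Hn. lia.
    - exists (Rmax M (Rabs (u K))). intros n Hn.
      destruct (Nat.eq_dec n K) as [->|Hne].
      + apply Rmax_r.
      + eapply Rle_trans; [apply HM; lia|apply Rmax_l]. }
  destruct (Hf N) as [M HM].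
  exists (Rmax M 1). intros n.
  destruct (Nat.lt_ge_cases n N) as [Hn|Hn].
  - eapply Rle_trans; [apply HM; auto|apply Rmax_l].
  - specialize (HN n Hn). rewrite Rminus_0_r in HN.
    eapply Rle_trans; [left; apply HN|apply Rmax_r].
Qed.

Lemma rad_inf (a : nat -> R) : (forall x, ex_pseries a x) -> CV_radius a = p_infty.
Proof.
  intros H.
  destruct (CV_radius_bounded a) as [Hub _].
  assert (Hall : forall r : R, Rbar_le r (CV_radius a)).
  { intros r. apply Hub.
    specialize (H r). apply ex_pseries_R in H.
    apply ex_series_lim_0 in H.
    destruct (bounded_of_lim _ H) as [M HM]. exists M. exact HM. }
  destruct (CV_radius a) as [f| |] eqn:E; auto.
  - specialize (Hall (f+1)). simpl in Hall. lra.
  - specialize (Hall 0). simpl in Hall. contradiction.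
Qed.

Definition An (f : R -> R) := exists a, CV_radius a = p_infty /\ forall x, f x = PSeries a x.

Lemma rlt_inf a x : CV_radius a = p_infty -> Rbar_lt (Rabs x) (CV_radius a).
Proof. intros ->. simpl. trivial. Qed.

Lemma An_ext f g : An f -> (forall x, f x = g x) -> An g.
Proof. intros [a [Ha Hf]] E. exists a. split; auto. intros x. rewrite <- E. auto. Qed.

Lemma An_is f (a : nat -> R) : (forall x, is_pseries a x (f x)) -> An f.
Proof.
  intros H. exists a. split.
  - apply rad_inf. intros x. eexists. apply H.
  - intros x. symmetry. apply is_pseries_unique. apply H.
Qed.

Lemma An_plus f g : An f -> An g -> An (fun x => f x + g x).
Proof.
  intros [a [Ha Hf]] [b [Hb Hg]].
  apply An_is with (PS_plus a b). intros x.
  rewrite Hf, Hg, <- PSeries_plus.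
  - apply PSeries_correct. apply ex_pseries_plus; apply CV_radius_inside, rlt_inf; auto.
  - apply CV_radius_inside, rlt_inf; auto.
  - apply CV_radius_inside, rlt_inf; auto.
Qed.

Lemma An_mult f g : An f -> An g -> An (fun x => f x * g x).
Proof.
  intros [a [Ha Hf]] [b [Hb Hg]].
  apply An_is with (PS_mult a b). intros x.
  rewrite Hf, Hg, <- PSeries_mult by (apply rlt_inf; auto).
  apply PSeries_correct. apply ex_pseries_mult; apply rlt_inf; auto.
Qed.

Lemma An_xmul f : An f -> An (fun x => x * f x).
Proof.
  intros [a [Ha Hf]].
  apply An_is with (PS_incr_1 a). intros x.
  rewrite Hf, <- PSeries_incr_1.
  apply PSeries_correct. apply ex_pseries_incr_1. apply CV_radius_inside, rlt_inf; auto.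
Qed.

Lemma An_scal c f : An f -> An (fun x => c * f x).
Proof.
  intros [a [Ha Hf]].
  apply An_is with (PS_scal c a). intros x.
  rewrite Hf, <- PSeries_scal.
  apply PSeries_correct. apply ex_pseries_scal.
  - apply Rmult_comm.
  - apply CV_radius_inside, rlt_inf; auto.
Qed.

Lemma An_lin k f : An f -> An (fun x => f (k * x)).
Proof.
  intros [a [Ha Hf]].
  apply An_is with (fun n => k ^ n * a n). intros x.
  rewrite Hf.
  assert (H := PSeries_correct a (k * x) (CV_radius_inside _ _ (rlt_inf _ _ Ha))).
  apply is_pseries_R in H. apply is_pseries_R.
  eapply is_series_ext; [|exact H]. intros n. simpl.
  rewrite Rpow_mult_distr. ring.
Qed.

Definition ev (b : nat -> R) (n : nat) : R := if Nat.even n then b (Nat.div2 n) else 0.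
Definition od (b : nat -> R) (n : nat) : R := if Nat.even n then 0 else b (Nat.div2 n).

Lemma even2 n : Nat.even (2 * n) = true /\ Nat.div2 (2 * n) = n.
Proof.
  split.
  - rewrite Nat.even_mul. reflexivity.
  - apply Nat.div2_double.
Qed.

Lemma even21 n : Nat.even (2 * n + 1) = false /\ Nat.div2 (2 * n + 1) = n.
Proof.
  split.
  - rewrite Nat.add_1_r, Nat.even_succ, Nat.odd_mul. reflexivity.
  - rewrite Nat.add_1_r. apply Nat.div2_succ_double.
Qed.

Lemma is_pseries_zero y : is_pseries (fun _ : nat => 0) y 0.
Proof.
  assert (H := PSeries_correct (fun _ : nat => 0) y).
  rewrite PSeries_const_0 in H. apply H.
  apply CV_radius_inside. rewrite CV_radius_const_0. simpl; trivial.
Qed.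

Lemma ev_sub b x l : is_pseries b (x ^ 2) l -> is_pseries (ev b) x l.
Proof.
  intros H.
  replace l with (l + x * 0) by ring.
  apply is_pseries_odd_even.
  - eapply is_pseries_ext; [|exact H]. intros n. unfold ev.
    destruct (even2 n) as [-> ->]. reflexivity.
  - eapply is_pseries_ext; [|apply is_pseries_zero]. intros n. unfold ev.
    destruct (even21 n) as [-> _]. reflexivity.
Qed.

Lemma od_sub b x l : is_pseries b (x ^ 2) l -> is_pseries (od b) x (x * l).
Proof.
  intros H.
  replace (x * l) with (0 + x * l) by ring.
  apply is_pseries_odd_even.
  - eapply is_pseries_ext; [|apply is_pseries_zero]. intros n. unfold od.
    destruct (even2 n) as [-> _]. reflexivity.
  - eapply is_pseries_ext; [|exact H]. intros n. unfold od.
    destruct (even21 n) as [-> ->]. reflexivity.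
Qed.

Lemma An_sq f : An f -> An (fun x => f (x ^ 2)).
Proof.
  intros [a [Ha Hf]].
  apply An_is with (ev a). intros x. apply ev_sub.
  rewrite Hf. apply PSeries_correct. apply CV_radius_inside, rlt_inf; auto.
Qed.

Lemma An_cos : An cos.
Proof.
  apply An_is with (ev cos_n). intros x. apply ev_sub.
  unfold cos. destruct (exist_cos (Rsqr x)) as [l Hl].
  apply is_pseries_Reals. unfold cos_in in Hl.
  replace (x ^ 2) with (Rsqr x) by (unfold Rsqr; ring). exact Hl.
Qed.

Lemma An_sin : An sin.
Proof.
  apply An_is with (od sin_n). intros x. unfold sin.
  destruct (exist_sin (Rsqr x)) as [l Hl]. apply od_sub.
  apply is_pseries_Reals. unfold sin_in in Hl.
  replace (x ^ 2) with (Rsqr x) by (unfold Rsqr; ring). exact Hl.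
Qed.

Lemma An_const c : An (fun _ => c).
Proof.
  apply An_ext with (fun x => c * cos (0 * x)).
  - apply An_scal. apply (An_lin 0 cos An_cos).
  - intros x. rewrite Rmult_0_l, cos_0. ring.
Qed.

Lemma An_id : An (fun x => x).
Proof.
  apply An_ext with (fun x => x * 1).
  - apply An_xmul, An_const.
  - intros; ring.
Qed.

Lemma An_minus f g : An f -> An g -> An (fun x => f x - g x).
Proof.
  intros Hf Hg. apply An_ext with (fun x => f x + (-1) * g x).
  - apply An_plus; auto. apply An_scal; auto.
  - intros; ring.
Qed.

Lemma An_cosq A B C : An (fun h => cos (A + B * h + C * h ^ 2)).
Proof.
  apply An_ext with (fun h => cos A * (cos (B * h) * cos (C * h ^ 2) - sin (B * h) * sin (C * h ^ 2))
                              - sin A * (sin (B * h) * cos (C * h ^ 2) + cos (B * h) * sin (C * h ^ 2))).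
  - assert (c1 := An_lin B _ An_cos). assert (s1 := An_lin B _ An_sin).
    assert (c2 := An_sq _ (An_lin C _ An_cos)). assert (s2 := An_sq _ (An_lin C _ An_sin)).
    simpl in *.
    apply An_minus; apply An_scal; [apply An_minus|apply An_plus]; apply An_mult; auto.
  - intros h. rewrite Rplus_assoc, cos_plus, cos_plus, sin_plus. ring.
Qed.

Lemma An_sinq A B C : An (fun h => sin (A + B * h + C * h ^ 2)).
Proof.
  apply An_ext with (fun h => sin A * (cos (B * h) * cos (C * h ^ 2) - sin (B * h) * sin (C * h ^ 2))
                              + cos A * (sin (B * h) * cos (C * h ^ 2) + cos (B * h) * sin (C * h ^ 2))).
  - assert (c1 := An_lin B _ An_cos). assert (s1 := An_lin B _ An_sin).
    assert (c2 := An_sq _ (An_lin C _ An_cos)). assert (s2 := An_sq _ (An_lin C _ An_sin)).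
    simpl in *.
    apply An_plus; apply An_scal; [apply An_minus|apply An_plus]; apply An_mult; auto.
  - intros h. rewrite Rplus_assoc, sin_plus, cos_plus, sin_plus. ring.
Qed.

Lemma least_nat (P : nat -> Prop) : (exists n, P n) -> exists n, P n /\ forall k, (k < n)%nat -> ~ P k.
Proof.
  intros [n Hn]. revert Hn. induction n as [n IH] using Wf_nat.lt_wf_ind. intros Hn.
  destruct (classic (exists k, (k < n)%nat /\ P k)) as [[k [Hk Pk]]|Hno].
  - apply (IH k Hk Pk).
  - exists n. split; auto. intros k Hk Pk. apply Hno. eauto.
Qed.

Lemma rad_decr_n (b : nat -> R) n : CV_radius (PS_decr_n b n) = CV_radius b.
Proof.
  induction n.
  - apply CV_radius_ext. intros k. reflexivity.
  - rewrite <- IHn, <- (CV_radius_decr_1 (PS_decr_n b n)). apply CV_radius_ext. intros k.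
    unfold PS_decr_n, PS_decr_1. simpl. f_equal. lia.
Qed.

Lemma cont0 (c : nat -> R) : CV_radius c = p_infty ->
  forall e, 0 < e -> exists eta, 0 < eta /\ forall x, Rabs x < eta -> Rabs (PSeries c x - c O) < e.
Proof.
  intros Hc e He.
  assert (H := PSeries_continuity c 0 (rlt_inf _ _ Hc)).
  destruct (H e He) as [alp [Halp Hx]].
  exists alp. split; auto. intros x Hxa.
  destruct (Req_dec x 0) as [->|Hne].
  - rewrite PSeries_0. rewrite Rminus_diag, Rabs_R0. auto.
  - rewrite <- (PSeries_0 c). apply Hx. split.
    + split; [exact I| auto].
    + simpl. unfold R_dist. rewrite Rminus_0_r. auto.
Qed.

Lemma key (a : nat -> R) d : CV_radius a = p_infty -> 0 < d ->
  (forall h, -d < h < 0 -> PSeries a 0 < PSeries a h) ->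
  exists e, 0 < e /\ forall s t, -e < s -> s < t -> t < 0 -> PSeries a t < PSeries a s.
Proof.
  intros Ha Hd Hg.
  assert (Hex : exists n, (1 <= n)%nat /\ a n <> 0).
  { apply NNPP. intros Hno.
    assert (Hz : forall n, (1 <= n)%nat -> a n = 0).
    { intros n Hn. apply NNPP. intros Hne. apply Hno. eauto. }
    assert (E : PSeries a (-d/2) = PSeries a 0).
    { rewrite PSeries_0, PSeries_decr_1 by (apply CV_radius_inside, rlt_inf; auto).
      rewrite (PSeries_ext _ (fun _ => 0)).
      - rewrite PSeries_const_0. ring.
      - intros n. unfold PS_decr_1. apply Hz. lia. }
    specialize (Hg (-d/2)). lra. }
  destruct (least_nat _ Hex) as [m [[Hm1 Ham] Hmin]].
  set (b := PS_derive a).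
  assert (Hb : forall k, (k < m - 1)%nat -> b k = 0).
  { intros k Hk. unfold b, PS_derive.
    assert (a (S k) = 0).
    { apply NNPP. intros Hne. apply (Hmin (S k)); [lia|]. split; [lia|auto]. }
    rewrite H. ring. }
  set (c := PS_decr_n b (m - 1)).
  assert (Hc0 : c O <> 0).
  { unfold c, PS_decr_n, b, PS_derive.
    replace (S (m - 1 + 0)) with m by lia.
    apply Rmult_integral_contrapositive. split; auto.
    apply not_0_INR. lia. }
  assert (Hrb : CV_radius b = p_infty) by (unfold b; rewrite CV_radius_derive; auto).
  assert (Hrc : CV_radius c = p_infty) by (unfold c; rewrite rad_decr_n; auto).
  assert (Hder : forall x, derivable_pt_lim (PSeries a) x (PSeries b x)).
  { intros x. apply is_derive_Reals. apply is_derive_PSeries. apply rlt_inf; auto. }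
  assert (Hbx : forall x, PSeries b x = x ^ (m - 1) * PSeries c x).
  { intros x. apply PSeries_decr_n_aux. auto. }
  destruct (cont0 c Hrc (Rabs (c O))) as [eta [Heta Hcx]].
  { apply Rabs_pos_lt; auto. }
  assert (Hsign : forall x, Rabs x < eta -> 0 < PSeries c x * c O).
  { intros x Hx. specialize (Hcx x Hx).
    destruct (Rle_or_lt 0 (c O)) as [Hp|Hn].
    - rewrite (Rabs_pos_eq (c O)) in Hcx by auto. apply Rabs_def2 in Hcx.
      assert (0 < c O) by (destruct Hp as [Hp|Hp]; [auto|congruence]). apply Rmult_lt_0_compat; lra.
    - rewrite (Rabs_left (c O)) in Hcx by auto. apply Rabs_def2 in Hcx.
      replace (PSeries c x * c O) with ((- PSeries c x) * (- c O)) by ring.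
      apply Rmult_lt_0_compat; lra. }
  set (e := Rmin eta d).
  assert (He : 0 < e) by (unfold e; apply Rmin_glb_lt; auto).
  assert (Hsame : forall x y, -e < x < 0 -> -e < y < 0 -> 0 < PSeries b x * PSeries b y).
  { intros x y Hx Hy.
    assert (Hex1 : Rabs x < eta).
    { rewrite Rabs_left by lra. assert (e <= eta) by apply Rmin_l. lra. }
    assert (Hey1 : Rabs y < eta).
    { rewrite Rabs_left by lra. assert (e <= eta) by apply Rmin_l. lra. }
    rewrite !Hbx.
    assert (P1 := Hsign x Hex1). assert (P2 := Hsign y Hey1).
    assert (Hxy : 0 < (x * y) ^ (m - 1)) by (apply pow_lt; nra).
    rewrite Rpow_mult_distr in Hxy.
    assert (0 < PSeries c x * PSeries c y).
    { assert (0 < (PSeries c x * c O) * (PSeries c y * c O)) by (apply Rmult_lt_0_compat; auto).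
      assert (0 < c O * c O) by (apply Rmult_lt_0_compat + idtac; nra).
      nra. }
    replace (x ^ (m - 1) * PSeries c x * (y ^ (m - 1) * PSeries c y))
      with ((x ^ (m - 1) * y ^ (m - 1)) * (PSeries c x * PSeries c y)) by ring.
    apply Rmult_lt_0_compat; auto. }
  assert (Hneg : exists z, -e < z < 0 /\ PSeries b z < 0).
  { destruct (MVT_cor2 (PSeries a) (PSeries b) (-e/2) 0) as [z [Hz1 Hz2]]; [lra| intros; apply Hder|].
    exists z. split; [lra|].
    assert (PSeries a 0 < PSeries a (-e/2)).
    { apply Hg. assert (e <= d) by apply Rmin_r. lra. }
    nra. }
  destruct Hneg as [z [Hz Hbz]].
  exists e. split; auto. intros s t Hs Hst Ht.
  destruct (MVT_cor2 (PSeries a) (PSeries b) s t) as [w [Hw1 Hw2]]; [lra| intros; apply Hder|].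
  assert (0 < PSeries b w * PSeries b z) by (apply Hsame; lra).
  assert (PSeries b w < 0) by nra.
  nra.
Qed.

Lemma lin_sign u k : exists dl, 0 < dl /\
  ((forall x, 0 <= x < dl -> u + k * x <= 0) \/ (forall x, 0 <= x < dl -> 0 <= u + k * x)).
Proof.
  assert (Hk : 0 < Rabs k + 1) by (generalize (Rabs_pos k); lra).
  destruct (Rtotal_order u 0) as [Hu|[Hu|Hu]].
  - exists (- u / (Rabs k + 1)). split.
    + apply Rdiv_lt_0_compat; lra.
    + left. intros x [Hx1 Hx2].
      assert (x * (Rabs k + 1) < - u).
      { apply (Rmult_lt_compat_r (Rabs k + 1)) in Hx2; auto.
        unfold Rdiv in Hx2. rewrite Rmult_assoc, Rinv_l in Hx2 by lra. lra. }
      assert (k * x <= Rabs k * x) by (apply Rmult_le_compat_r; auto; apply Rle_abs).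
      nra.
  - exists 1. split; [lra|]. subst u.
    destruct (Rle_or_lt k 0).
    + left. intros x Hx. nra.
    + right. intros x Hx. nra.
  - exists (u / (Rabs k + 1)). split.
    + apply Rdiv_lt_0_compat; lra.
    + right. intros x [Hx1 Hx2].
      assert (x * (Rabs k + 1) < u).
      { apply (Rmult_lt_compat_r (Rabs k + 1)) in Hx2; auto.
        unfold Rdiv in Hx2. rewrite Rmult_assoc, Rinv_l in Hx2 by lra. lra. }
      assert (- k * x <= Rabs k * x).
      { apply Rmult_le_compat_r; auto. rewrite <- Rabs_Ropp. apply Rle_abs. }
      nra.
Qed.

Lemma mm_rep (b : bool) w0 K t0 (P : R -> Prop) :
  (forall t, P t -> w0 + K * (t - t0) <= 0) \/ (forall t, P t -> 0 <= w0 + K * (t - t0)) ->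
  exists W0 K1, forall t, P t ->
    (if b then Rmin 0 (w0 + K * (t - t0)) else Rmax 0 (w0 + K * (t - t0))) = W0 + K1 * (t - t0).
Proof.
  intros [H|H]; destruct b.
  - exists w0, K. intros t Ht. apply Rmin_right. auto.
  - exists 0, 0. intros t Ht. rewrite Rmax_left by auto. ring.
  - exists 0, 0. intros t Ht. rewrite Rmin_left by auto. ring.
  - exists w0, K. intros t Ht. apply Rmax_right. auto.
Qed.

Lemma omega_piece t0 v a T : exists dl, 0 < dl /\ exists W0 K1 W0' K1',
  (forall t, T - dl < t <= T -> circ_omega t0 v a t = W0 + K1 * (t - t0)) /\
  (forall t, T <= t < T + dl -> circ_omega t0 v a t = W0' + K1' * (t - t0)).
Proof.
  set (w0 := circ_omega0 v a). set (K := a_f v a / (2 * circ_r v a)).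
  destruct (lin_sign (w0 + K * (T - t0)) (- K)) as [d1 [Hd1 H1]].
  destruct (lin_sign (w0 + K * (T - t0)) K) as [d2 [Hd2 H2]].
  exists (Rmin d1 d2). split; [apply Rmin_glb_lt; auto|].
  assert (L : (forall t, T - Rmin d1 d2 < t <= T -> w0 + K * (t - t0) <= 0) \/
              (forall t, T - Rmin d1 d2 < t <= T -> 0 <= w0 + K * (t - t0))).
  { assert (Hm := Rmin_l d1 d2).
    destruct H1 as [H1|H1]; [left|right]; intros t Ht;
      (replace (w0 + K * (t - t0)) with (w0 + K * (T - t0) + - K * (T - t)) by ring);
      apply H1; lra. }
  assert (Rr : (forall t, T <= t < T + Rmin d1 d2 -> w0 + K * (t - t0) <= 0) \/
              (forall t, T <= t < T + Rmin d1 d2 -> 0 <= w0 + K * (t - t0))).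
  { assert (Hm := Rmin_r d1 d2).
    destruct H2 as [H2|H2]; [left|right]; intros t Ht;
      (replace (w0 + K * (t - t0)) with (w0 + K * (T - t0) + K * (t - T)) by ring);
      apply H2; lra. }
  unfold circ_omega. cbv zeta. fold w0. fold K.
  destruct (Rlt_dec w0 0).
  - destruct (mm_rep true w0 K t0 _ L) as [W0 [K1 HL]].
    destruct (mm_rep true w0 K t0 _ Rr) as [W0' [K1' HR]].
    exists W0, K1, W0', K1'. split; auto.
  - destruct (mm_rep false w0 K t0 _ L) as [W0 [K1 HL]].
    destruct (mm_rep false w0 K t0 _ Rr) as [W0' [K1' HR]].
    exists W0, K1, W0', K1'. split; auto.
Qed.

Lemma An_poly2 c0 c1 c2 : An (fun h => c0 + c1 * h + c2 * h ^ 2).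
Proof.
  apply An_plus; [apply An_plus|].
  - apply An_const.
  - apply An_scal, An_id.
  - apply An_scal. apply An_ext with (fun h => h * (h * 1)).
    + apply An_xmul, An_xmul, An_const.
    + intros; ring.
Qed.

Lemma An_circ cx r A B C : An (fun h => cx + r * cos (A + B * h + C * h ^ 2)).
Proof. apply An_plus; [apply An_const|apply An_scal, An_cosq]. Qed.
Lemma An_circs cy r A B C : An (fun h => cy + r * sin (A + B * h + C * h ^ 2)).
Proof. apply An_plus; [apply An_const|apply An_scal, An_sinq]. Qed.

Definition side_ok (I : R -> Prop) (T : R) (F : R -> vec) :=
  exists fx fy, An fx /\ An fy /\ forall t, I t -> fst (F t) = fx (t - T) /\ snd (F t) = fy (t - T).

Lemma circ_side t0 p v a T (I : R -> Prop) W0 K1 :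
  (forall t, I t -> circ_omega t0 v a t = W0 + K1 * (t - t0)) ->
  side_ok I T (circ_pos t0 p v a).
Proof.
  intros Hom.
  set (s := T - t0).
  set (A := circ_alpha0 p v a + (W0 + K1 * s) * s).
  set (B := W0 + 2 * K1 * s). set (C := K1).
  set (cc := circ_center p v a). set (r := circ_r v a).
  exists (fun h => fst cc + r * cos (A + B * h + C * h ^ 2)),
         (fun h => snd cc + r * sin (A + B * h + C * h ^ 2)).
  split; [apply An_circ|]. split; [apply An_circs|].
  intros t It.
  assert (E : circ_alpha0 p v a + circ_omega t0 v a t * (t - t0) = A + B * (t - T) + C * (t - T) ^ 2).
  { rewrite (Hom t It). unfold A, B, C, s. ring. }
  unfold circ_pos. cbv zeta. rewrite E. fold cc r. simpl. split; reflexivity.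
Qed.

Lemma pos_piece m t0 p v a T : exists dl, 0 < dl /\
  side_ok (fun t => T - dl < t <= T) T (model_pos m t0 p v a) /\
  side_ok (fun t => T <= t < T + dl) T (model_pos m t0 p v a).
Proof.
  destruct m; simpl.
  - exists 1. split; [lra|].
    assert (S : forall I : R -> Prop, side_ok I T (straight_pos t0 p v a)).
    { intros I.
      exists (fun h => (fst p + (T - t0) * fst v + / 2 * (T - t0) ^ 2 * fst a)
                       + (fst v + (T - t0) * fst a) * h + (/ 2 * fst a) * h ^ 2),
             (fun h => (snd p + (T - t0) * snd v + / 2 * (T - t0) ^ 2 * snd a)
                       + (snd v + (T - t0) * snd a) * h + (/ 2 * snd a) * h ^ 2).
      split; [apply An_poly2|]. split; [apply An_poly2|].
      intros t _. unfold straight_pos, vadd, vscale. cbn [fst snd]. split; field. }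
    split; apply S.
  - destruct (omega_piece t0 v a T) as [dl [Hdl [W0 [K1 [W0' [K1' [HL HR]]]]]]].
    exists dl. split; auto. split.
    + apply (circ_side _ _ _ _ _ _ W0 K1 HL).
    + apply (circ_side _ _ _ _ _ _ W0' K1' HR).
Qed.

Lemma An_cont f : An f -> forall e, 0 < e -> exists eta, 0 < eta /\
  forall h, Rabs h < eta -> Rabs (f h - f 0) < e.
Proof.
  intros [a [Ha Hf]] e He.
  destruct (cont0 a Ha e He) as [eta [Heta H]].
  exists eta. split; auto. intros h Hh. rewrite !Hf, PSeries_0. auto.
Qed.

Lemma An_sqr f : An f -> An (fun x => f x ^ 2).
Proof. intros H. apply An_ext with (fun x => f x * f x); [apply An_mult; auto|intros; ring]. Qed.

Lemma side_D2 (I : R -> Prop) T F G : side_ok I T F -> side_ok I T G ->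
  exists g, An g /\ forall t, I t ->
    (fst (F t) - fst (G t)) ^ 2 + (snd (F t) - snd (G t)) ^ 2 = g (t - T).
Proof.
  intros [fx [fy [Hfx [Hfy HF]]]] [gx [gy [Hgx [Hgy HG]]]].
  exists (fun h => (fx h - gx h) ^ 2 + (fy h - gy h) ^ 2). split.
  - apply An_plus; apply An_sqr; apply An_minus; auto.
  - intros t It. destruct (HF t It) as [-> ->]. destruct (HG t It) as [-> ->]. reflexivity.
Qed.

Lemma side_mono (I J : R -> Prop) T F : (forall t, J t -> I t) -> side_ok I T F -> side_ok J T F.
Proof.
  intros HIJ [fx [fy [H1 [H2 H3]]]]. exists fx, fy. split; auto.
Qed.

Lemma sqrt_gt_iff x phi : 0 < phi -> 0 <= x -> (phi < sqrt x <-> phi ^ 2 < x).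
Proof.
  intros Hp Hx. split; intros H.
  - assert (0 <= sqrt x) by apply sqrt_pos.
    rewrite <- (sqrt_sqrt x Hx). nra.
  - rewrite <- (sqrt_pow2 phi) by lra. apply sqrt_lt_1_alt. split; auto. nra.
Qed.

Theorem theorem1
  (vmax amax phi t0 : R) (hphi : 0 < phi)
  (pi vi ai pj vj aj : vec) (mi mj : model)
  (hvi : vnorm vi < vmax) (hai : vnorm ai < amax)
  (hvj : vnorm vj < vmax) (haj : vnorm aj < amax)
  (hmi : model_ok mi vi ai) (hmj : model_ok mj vj aj)
  (hsep : phi < vnorm (vsub (model_pos mi t0 pi vi ai t0) (model_pos mj t0 pj vj aj t0)))
  (TS : R)
  (hTS : is_glb (fun t => t0 <= t /\
           vnorm (vsub (model_pos mi t0 pi vi ai t) (model_pos mj t0 pj vj aj t)) - phi <= 0) TS)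
  (hne : exists t, t0 <= t /\
           vnorm (vsub (model_pos mi t0 pi vi ai t) (model_pos mj t0 pj vj aj t)) - phi <= 0) :
  let d := fun t => vnorm (vsub (model_pos mi t0 pi vi ai t) (model_pos mj t0 pj vj aj t)) in
  exists tc, t0 <= tc < TS /\
    forall s t, tc <= s -> s < t -> t < TS -> d t - phi < d s - phi.
Proof.
  intros d.
  set (Fi := model_pos mi t0 pi vi ai). set (Fj := model_pos mj t0 pj vj aj).
  set (D2 := fun t => (fst (Fi t) - fst (Fj t)) ^ 2 + (snd (Fi t) - snd (Fj t)) ^ 2).
  assert (Hd : forall t, d t = sqrt (D2 t)) by (intros; reflexivity).
  assert (HD0 : forall t, 0 <= D2 t).
  { intros t. unfold D2. generalize (pow2_ge_0 (fst (Fi t) - fst (Fj t))) (pow2_ge_0 (snd (Fi t) - snd (Fj t))). lra. }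
  destruct hTS as [Hlow Hgl].
  assert (HT0 : t0 <= TS) by (apply Hgl; intros x [Hx _]; auto).
  assert (Hbig : forall t, t0 <= t < TS -> phi < d t).
  { intros t Ht. destruct (Rlt_or_le phi (d t)) as [H|H]; auto.
    assert (TS <= t) by (apply Hlow; split; [lra|unfold d in H; lra]). lra. }
  destruct (pos_piece mi t0 pi vi ai TS) as [di [Hdi [SLi SRi]]].
  destruct (pos_piece mj t0 pj vj aj TS) as [dj [Hdj [SLj SRj]]].
  set (dl := Rmin di dj).
  assert (Hdl : 0 < dl) by (apply Rmin_glb_lt; auto).
  assert (Hdli := Rmin_l di dj). assert (Hdlj := Rmin_r di dj). fold dl in Hdli, Hdlj.
  destruct (side_D2 (fun t => TS - dl < t <= TS) TS Fi Fj) as [gL [HgL EL]].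
  { eapply side_mono; [|exact SLi]. simpl; intros t Ht; lra. }
  { eapply side_mono; [|exact SLj]. simpl; intros t Ht; lra. }
  destruct (side_D2 (fun t => TS <= t < TS + dl) TS Fi Fj) as [gR [HgR ER]].
  { eapply side_mono; [|exact SRi]. simpl; intros t Ht; lra. }
  { eapply side_mono; [|exact SRj]. simpl; intros t Ht; lra. }
  assert (HdT : D2 TS <= phi ^ 2).
  { destruct (Rle_or_lt (D2 TS) (phi ^ 2)) as [H|H]; auto. exfalso.
    destruct (An_cont gR HgR (D2 TS - phi ^ 2)) as [eta [Heta Hc]]; [lra|].
    set (eta' := Rmin eta dl).
    assert (He' : 0 < eta') by (apply Rmin_glb_lt; auto).
    assert (He1 := Rmin_l eta dl). assert (He2 := Rmin_r eta dl). fold eta' in He1, He2.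
    assert (ER0 : D2 TS = gR 0).
    { replace 0 with (TS - TS) by ring. apply ER. lra. }
    assert (TS + eta' / 2 <= TS).
    { apply Hgl. intros x [Hx1 Hx2]. specialize (Hlow x (conj Hx1 Hx2)).
      destruct (Rlt_or_le x (TS + eta' / 2)) as [Hx|Hx]; auto. exfalso.
      assert (E : D2 x = gR (x - TS)) by (apply ER; lra).
      assert (Rabs (x - TS) < eta) by (rewrite Rabs_pos_eq; lra).
      specialize (Hc _ H0). rewrite <- E, <- ER0 in Hc.
      apply Rabs_def2 in Hc. destruct Hc as [Hc1 Hc2].
      assert (phi < d x). { rewrite Hd. apply sqrt_gt_iff; auto. lra. }
      change (d x - phi <= 0) in Hx2. lra. }
    lra. }
  assert (HT1 : t0 < TS).
  { destruct HT0 as [H|H]; auto. exfalso. subst TS.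
    assert (phi < d t0) by exact hsep.
    rewrite Hd in H. apply sqrt_gt_iff in H; auto. lra. }
  destruct HgL as [a [Ha Hga]].
  set (dd := Rmin dl (TS - t0)).
  assert (Hdd : 0 < dd) by (apply Rmin_glb_lt; lra).
  assert (Hdd1 := Rmin_l dl (TS - t0)). assert (Hdd2 := Rmin_r dl (TS - t0)). fold dd in Hdd1, Hdd2.
  assert (EL0 : D2 TS = PSeries a 0).
  { rewrite <- Hga. replace 0 with (TS - TS) by ring. apply EL. lra. }
  assert (ELh : forall t, TS - dl < t <= TS -> D2 t = PSeries a (t - TS)).
  { intros t Ht. rewrite <- Hga. apply EL. auto. }
  destruct (key a dd Ha Hdd) as [e [He Hmono]].
  { intros h Hh. rewrite <- EL0.
    replace h with ((TS + h) - TS) by ring. rewrite <- ELh by lra.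
    assert (phi < d (TS + h)) by (apply Hbig; lra).
    rewrite Hd in H. apply sqrt_gt_iff in H; auto. lra. }
  exists (TS - Rmin e dd / 2).
  assert (Hm1 := Rmin_l e dd). assert (Hm2 := Rmin_r e dd).
  assert (0 < Rmin e dd) by (apply Rmin_glb_lt; auto).
  split; [lra|].
  intros s t Hs Hst Ht.
  assert (D2 t < D2 s).
  { rewrite !ELh by lra. apply Hmono; lra. }
  rewrite !Hd.
  assert (sqrt (D2 t) < sqrt (D2 s)) by (apply sqrt_lt_1_alt; split; auto).
  lra.
Qed.
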